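(* Let $G$ be an infinite connected simple undirected graph with vertex degrees bounded by $v<\infty$ and internal scaling dimension $D$ (i.e. $D_S(x)=D$ for all vertices $x$). Fix an integer $l_0\ge 1$ and let $\hat G_{cl}$ be the purified clique graph with overlap threshold $l_0$. Then for every clique $C$ of $G$ the upper internal scaling dimension of $\hat G_{cl}$ at $C$ satisfies $\overline{D}_S^{\hat G_{cl}}(C)\le D$.
   Context: Graphs are simple and undirected with graph metric $d$. For a vertex $x$ of a graph $H$, $U_n(x)$ is the ball of radius $n$ in $H$, $D_n(x)=\ln(\#U_n(x))/\ln n$, $\underline D_S(x)=\liminf_n D_n(x)$, $\overline D_S(x)=\limsup_n D_n(x)$; if these agree the value is $D_S(x)$, and $H$ has internal scaling dimension $D$ if $D_S(x)=D$ for all $x$. A clique of $G$ is a maximal complete subgraph. The purified clique graph $\hat G_{cl}$ with threshold $l_0$ has the cliques of $G$ as vertices, two distinct cliques $C,C'$ being adjacent iff $\#(C\cap C')\ge l_0$. *)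

(* Defs.v *)
From Stdlib Require Import Reals List ClassicalEpsilon.
From Coquelicot Require Import Coquelicot.
Open Scope R_scope.

Fixpoint reach {T : Type} (adj : T -> T -> Prop) (n : nat) (x y : T) : Prop :=
  match n with
  | O => x = y
  | S m => reach adj m x y \/ exists z, reach adj m x z /\ adj z y
  end.

Definition ball_n {T : Type} (adj : T -> T -> Prop) (x : T) (n : nat) : T -> Prop :=
  fun y => reach adj n x y.

Definition has_card {T : Type} (P : T -> Prop) (k : nat) : Prop :=
  exists l : list T, NoDup l /\ length l = k /\ forall y, P y <-> In y l.

(* Cardinality #P of a (finite) set P (unspecified if P is infinite). *)
Definition ncard {T : Type} (P : T -> Prop) : nat :=
  epsilon (inhabits 0%nat) (fun k => has_card P k).

Definition Dn {T : Type} (adj : T -> T -> Prop) (x : T) (n : nat) : R :=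
  ln (INR (ncard (ball_n adj x n))) / ln (INR n).

Definition upper_DS {T : Type} (adj : T -> T -> Prop) (x : T) : Rbar :=
  LimSup_seq (Dn adj x).
Definition lower_DS {T : Type} (adj : T -> T -> Prop) (x : T) : Rbar :=
  LimInf_seq (Dn adj x).

Definition has_internal_scaling_dim {T : Type} (adj : T -> T -> Prop) (D : R) : Prop :=
  forall x, lower_DS adj x = Finite D /\ upper_DS adj x = Finite D.

Definition simple_graph {T : Type} (adj : T -> T -> Prop) : Prop :=
  (forall x y, adj x y -> adj y x) /\ (forall x, ~ adj x x).

Definition connected_graph {T : Type} (adj : T -> T -> Prop) : Prop :=
  forall x y, exists n, reach adj n x y.

Definition infinite_type (T : Type) : Prop :=
  ~ exists l : list T, forall x, In x l.

Definition degree_bounded {T : Type} (adj : T -> T -> Prop) (v : nat) : Prop :=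
  forall x, exists l : list T, (length l <= v)%nat /\ forall y, adj x y -> In y l.

Definition complete_set {T : Type} (adj : T -> T -> Prop) (C : T -> Prop) : Prop :=
  forall x y, C x -> C y -> x <> y -> adj x y.

Definition is_clique {T : Type} (adj : T -> T -> Prop) (C : T -> Prop) : Prop :=
  complete_set adj C /\
  forall C' : T -> Prop, complete_set adj C' -> (forall x, C x -> C' x) ->
    forall x, C' x -> C x.

(* Purified clique graph with threshold l0: vertices are the cliques of G
   (as elements of T -> Prop), distinct cliques adjacent iff #(C ∩ C') >= l0. *)
Definition purified_clique_adj {T : Type} (adj : T -> T -> Prop) (l0 : nat)
    (C C' : T -> Prop) : Prop :=
  is_clique adj C /\ is_clique adj C' /\ C <> C' /\
  (l0 <= ncard (fun x => C x /\ C' x))%nat.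

(* Main.v *)
Require Import Defs.
From Stdlib Require Import Reals.
From Coquelicot Require Import Coquelicot.
From Stdlib Require Import List Lia Lra Classical FunctionalExtensionality PropExtensionality ClassicalEpsilon.
Import ListNotations.
Open Scope R_scope.

Lemma has_card_unique {T} (P : T -> Prop) k1 k2 : has_card P k1 -> has_card P k2 -> k1 = k2.
Proof.
  intros [l1 [N1 [L1 H1]]] [l2 [N2 [L2 H2]]]. subst.
  apply Nat.le_antisymm; apply NoDup_incl_length; auto; intros y Hy; firstorder.
Qed.

Lemma ncard_eq {T} (P : T -> Prop) k : has_card P k -> ncard P = k.
Proof.
  intro H. unfold ncard. apply (has_card_unique P).
  - apply (epsilon_spec (inhabits 0%nat) (fun k => has_card P k)). exists k; exact H.
  - exact H.
Qed.

Lemma finite_sub {T} (l : list T) : forall (P : T -> Prop), (forall y, P y -> In y l) ->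
  exists k, (k <= length l)%nat /\ has_card P k.
Proof.
  induction l as [|a l IH]; intros P HP.
  - exists 0%nat. split; [simpl; lia|]. exists nil. split; [constructor|split; [reflexivity|]].
    intro y; split; [intro Py; apply (HP y); auto | simpl; tauto].
  - destruct (IH (fun y => P y /\ y <> a)) as [k [Hk [l' [Nd [Ln Hl]]]]].
    { intros y [Py Hya]. destruct (HP y Py); [congruence|auto]. }
    destruct (classic (P a)) as [Pa|nPa].
    + exists (S k). split; [simpl; lia|]. exists (a :: l'). split; [|split].
      * constructor; auto. intro Hin. apply Hl in Hin. tauto.
      * simpl; lia.
      * intro y. split.
        -- intro Py. destruct (classic (y = a)); [left; auto| right; apply Hl; auto].
        -- intros [<-|Hin]; [auto| apply Hl in Hin; tauto].
    + exists k. split; [simpl; lia|]. exists l'. split; [auto|split; auto].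
      intro y. rewrite <- Hl. split; [intro Py; split; auto; intro; subst; tauto| tauto].
Qed.

Fixpoint pw {A} (l : list A) : list (list A) :=
  match l with nil => [nil] | a :: l => pw l ++ map (cons a) (pw l) end.

Lemma pw_length {A} (l : list A) : length (pw l) = (2 ^ length l)%nat.
Proof.
  induction l; simpl; auto. rewrite length_app, length_map, IHl. lia.
Qed.

Lemma pw_spec {A} (l : list A) : forall K : A -> Prop,
  exists s, In s (pw l) /\ forall y, In y s <-> In y l /\ K y.
Proof.
  induction l as [|a l IH]; intro K.
  - exists nil. simpl. split; [auto|tauto].
  - destruct (IH K) as [s0 [Hs0 Hsp]]. destruct (classic (K a)) as [Ka|nKa].
    + exists (a :: s0). split.
      * simpl. apply in_or_app. right. apply in_map. auto.
      * intro y. simpl. rewrite Hsp. split; [intros [<-|[]]; auto | intros [[<-|H] Ky]; auto].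
    + exists s0. split.
      * simpl. apply in_or_app. auto.
      * intro y. simpl. rewrite Hsp. split; [intros []; auto | intros [[<-|H] Ky]; [tauto|auto]].
Qed.

Lemma flat_map_length_le {A B} (f : A -> list B) (M : nat) (l : list A) :
  (forall x, (length (f x) <= M)%nat) -> (length (flat_map f l) <= length l * M)%nat.
Proof.
  intro H. induction l; simpl; auto. rewrite length_app. specialize (H a). lia.
Qed.

Lemma limsup_le (u : nat -> R) (D : R) :
  (forall eps, 0 < eps -> exists N, forall n, (N <= n)%nat -> u n <= D + eps) ->
  Rbar_le (LimSup_seq u) (Finite D).
Proof.
  intro H. destruct (ex_LimSup_seq u) as [l Hl]. rewrite (is_LimSup_seq_unique _ _ Hl).
  destruct l as [r| |]; simpl in *.
  - destruct (Rle_dec r D) as [|Hn]; auto. exfalso.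
    assert (He : 0 < (r - D)/2) by lra.
    destruct (Hl (mkposreal _ He)) as [Hf _]. destruct (H _ He) as [N HN].
    destruct (Hf N) as [n [Hn1 Hn2]]. simpl in Hn2. specialize (HN n Hn1). lra.
  - destruct (H 1 Rlt_0_1) as [N HN]. destruct (Hl (D+1) N) as [n [Hn1 Hn2]].
    specialize (HN n Hn1). lra.
  - auto.
Qed.

Lemma reach_mono {T} (adj : T -> T -> Prop) n x y : reach adj n x y -> reach adj (S n) x y.
Proof. intro H; left; exact H. Qed.

Lemma reach_refl {T} (adj : T -> T -> Prop) n x : reach adj n x x.
Proof. induction n; simpl; auto. Qed.

Lemma ln_ge0 x : 1 <= x -> 0 <= ln x.
Proof. intro H. rewrite <- ln_1. apply ln_le; lra. Qed.

Lemma div_le (a L B : R) : 0 < L -> a <= B * L -> a / L <= B.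
Proof.
  intros HL H. apply (Rmult_le_reg_r L); auto. unfold Rdiv. rewrite Rmult_assoc, Rinv_l; lra.
Qed.

Lemma lt_div (a L B : R) : 0 < L -> a / L < B -> a < B * L.
Proof.
  intros HL H. replace a with ((a / L) * L) by (field; lra). apply Rmult_lt_compat_r; auto.
Qed.

Lemma clique_nonempty {V} (adj : V -> V -> Prop) (K : V -> Prop) (x0 : V) :
  is_clique adj K -> exists y, K y.
Proof.
  intros [Hc Hm]. destruct (classic (exists y, K y)) as [|Hn]; auto.
  exists x0. apply (Hm (fun z => z = x0)).
  - intros a b -> -> H; congruence.
  - intros x Kx; exfalso; apply Hn; eauto.
  - reflexivity.
Qed.

Lemma ncard_pos_inter {T} (P : T -> Prop) : (1 <= ncard P)%nat -> exists w, P w.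
Proof.
  intro H. destruct (classic (exists w, P w)) as [|Hn]; auto.
  assert (has_card P 0). { exists nil. split; [constructor|split; [auto|]].
    intro y; split; [intro Py; exfalso; eauto | simpl; tauto]. }
  rewrite (ncard_eq _ _ H0) in H. lia.
Qed.

Lemma clique_inv {V} (adj : V -> V -> Prop) (l0 : nat) (C : V -> Prop) (x0 : V) :
  (1 <= l0)%nat -> is_clique adj C -> C x0 ->
  forall n K, reach (purified_clique_adj adj l0) n C K ->
    is_clique adj K /\ forall y, K y -> reach adj (S n) x0 y.
Proof.
  intros Hl0 HC Cx0. induction n as [|n IH]; intros K HK.
  - simpl in HK. subst K. split; auto. intros y Cy.
    destruct (classic (y = x0)) as [->|Hne].
    + left. reflexivity.
    + right. exists x0. split; [reflexivity|]. apply (proj1 HC); auto.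
  - destruct HK as [HK|[Z [HZ [_ [HKc [_ Hcard]]]]]].
    + destruct (IH K HK) as [H1 H2]. split; auto. intros y Ky. apply reach_mono; auto.
    + split; auto. destruct (IH Z HZ) as [_ HZr].
      destruct (ncard_pos_inter (fun x => Z x /\ K x)) as [w [Zw Kw]]; [lia|].
      intros y Ky. destruct (classic (y = w)) as [->|Hne].
      * left. apply HZr; auto.
      * right. exists w. split; [apply HZr; auto|]. apply (proj1 HKc); auto.
Qed.

Theorem mainTheorem5 (V : Type) (adj : V -> V -> Prop) (v : nat) (D : R)
  (l0 : nat) :
  simple_graph adj ->
  infinite_type V ->
  connected_graph adj ->
  degree_bounded adj v ->
  has_internal_scaling_dim adj D ->
  (1 <= l0)%nat ->
  forall C : V -> Prop, is_clique adj C ->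
    Rbar_le (upper_DS (purified_clique_adj adj l0) C) (Finite D).
Proof.
  intros _ Hinf _ Hdeg Hdim Hl0 C HC.
  assert (HNb : exists Nb : V -> list V, forall x, (length (Nb x) <= v)%nat /\
             forall y, adj x y -> In y (Nb x)).
  { exists (fun x => proj1_sig (constructive_indefinite_description _ (Hdeg x))).
    intro x. destruct (constructive_indefinite_description _ (Hdeg x)) as [l Hl]. exact Hl. }
  destruct HNb as [Nb HNb].
  assert (Hx : exists x : V, True).
  { apply NNPP. intro Hn. apply Hinf. exists nil. intro x. apply Hn. eauto. }
  destruct Hx as [xx _].
  destruct (clique_nonempty adj C xx HC) as [x0 Cx0].
  set (bl := fix bl (n : nat) : list V :=
         match n with O => [x0] | S m => bl m ++ flat_map Nb (bl m) end).
  assert (Hbl : forall n y, reach adj n x0 y -> In y (bl n)).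
  { induction n as [|n IH]; intros y Hy.
    - simpl in Hy. subst. simpl. auto.
    - simpl. apply in_or_app. destruct Hy as [Hy|[z [Hz Hzy]]].
      + left; auto.
      + right. apply in_flat_map. exists z. split; auto. apply HNb; auto. }
  assert (HB : forall n, exists B, NoDup B /\ length B = ncard (ball_n adj x0 n) /\
                 forall y, reach adj n x0 y <-> In y B).
  { intro n. destruct (finite_sub (bl n) (ball_n adj x0 n)) as [k [_ Hk]].
    { intros y Hy; apply Hbl; auto. }
    rewrite (ncard_eq _ _ Hk). exact Hk. }
  set (A := (2 ^ S v)%nat).
  assert (Hcount : forall n, (1 <= ncard (ball_n (purified_clique_adj adj l0) C n))%nat /\
     (ncard (ball_n (purified_clique_adj adj l0) C n) <= ncard (ball_n adj x0 (S n)) * A)%nat).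
  { intro n. destruct (HB (S n)) as [B [NdB [LB HBs]]].
    set (cand := flat_map (fun y => map (fun s z => In z s) (pw (y :: Nb y))) B).
    destruct (finite_sub cand (ball_n (purified_clique_adj adj l0) C n)) as [k [Hk Hck]].
    { intros K HK. unfold ball_n in HK.
      destruct (clique_inv adj l0 C x0 Hl0 HC Cx0 n K HK) as [HKc HKr].
      destruct (clique_nonempty adj K x0 HKc) as [y Ky].
      unfold cand. apply in_flat_map. exists y. split; [apply HBs; auto|].
      destruct (pw_spec (y :: Nb y) K) as [s [Hs Hsp]].
      apply in_map_iff. exists s. split; auto.
      apply functional_extensionality. intro z. apply propositional_extensionality.
      rewrite Hsp. split; [tauto|]. intro Kz. split; auto.
      destruct (classic (y = z)) as [->|Hyz]; [left; auto|].
      right. apply HNb. apply (proj1 HKc); auto. }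
    rewrite (ncard_eq _ _ Hck). split.
    - destruct Hck as [l [_ [Ll Hl]]]. subst k. destruct l; [|simpl; lia].
      exfalso. apply (proj1 (Hl C)). unfold ball_n. destruct n; simpl; [reflexivity|].
      clear. induction n; simpl; auto.
    - rewrite <- LB. eapply Nat.le_trans; [exact Hk|]. unfold cand.
      apply flat_map_length_le. intro y. rewrite length_map, pw_length. unfold A.
      apply Nat.pow_le_mono_r; [lia|]. simpl. specialize (HNb y). lia. }
  unfold upper_DS. apply limsup_le. intros eps He.
  destruct (Hdim x0) as [_ Hup]. unfold upper_DS in Hup.
  destruct (ex_LimSup_seq (Dn adj x0)) as [l Hl].
  rewrite (is_LimSup_seq_unique _ _ Hl) in Hup. subst l.
  assert (He2 : 0 < eps/2) by lra.
  destruct (proj2 (Hl (mkposreal _ He2))) as [N HN]. simpl in HN.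
  set (e := eps/2) in *.
  assert (Hcp : forall n, 1 <= INR (ncard (ball_n adj x0 n))).
  { intro n. destruct (HB n) as [B [_ [LB HBs]]]. rewrite <- LB. destruct B as [|b B].
    - exfalso. apply (proj1 (HBs x0)). apply reach_refl.
    - apply (le_INR 1). simpl; lia. }
  assert (Hlnpos : forall m, (2 <= m)%nat -> 0 < ln (INR m)).
  { intros m Hm. rewrite <- ln_1. apply ln_increasing; [lra|].
    apply (lt_INR 1) in Hm. simpl in Hm. lra. }
  assert (HDe : 0 < D + e).
  { specialize (HN (Nat.max N 2) ltac:(lia)). unfold Dn in HN.
    assert (0 <= ln (INR (ncard (ball_n adj x0 (Nat.max N 2)))) / ln (INR (Nat.max N 2))).
    { unfold Rdiv. apply Rmult_le_pos; [apply ln_ge0; auto|].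
      left; apply Rinv_0_lt_compat, Hlnpos; lia. }
    lra. }
  assert (HA1 : (1 <= A)%nat) by (unfold A; clear; induction v; simpl in *; lia).
  assert (Hln2 : 0 < ln 2) by (rewrite <- ln_1; apply ln_increasing; lra).
  set (K := ln (INR A) + (D+e) * ln 2).
  assert (HK : 0 <= K).
  { unfold K. assert (0 <= ln (INR A)) by (apply ln_ge0; apply (le_INR 1); auto).
    assert (0 <= (D+e) * ln 2) by (apply Rmult_le_pos; lra). lra. }
  destruct (INR_unbounded (exp (K / e))) as [M HM].
  exists (Nat.max (Nat.max N M) 2). intros n Hn.
  unfold Dn.
  destruct (Hcount n) as [Ha1 Hab].
  set (a := INR (ncard (ball_n (purified_clique_adj adj l0) C n))) in *.
  set (b := INR (ncard (ball_n adj x0 (S n)))).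
  assert (Hb1 : 1 <= b) by apply Hcp.
  assert (Ha1' : 1 <= a) by (apply (le_INR 1) in Ha1; exact Ha1).
  assert (Hab' : a <= b * INR A) by (unfold a, b; rewrite <- mult_INR; apply le_INR; auto).
  assert (Hlna : ln a <= ln b + ln (INR A)).
  { rewrite <- ln_mult; [|lra|apply (lt_INR 0); lia]. apply ln_le; lra. }
  assert (HL1 : 0 < ln (INR (S n))) by (apply Hlnpos; lia).
  assert (HL : 0 < ln (INR n)) by (apply Hlnpos; lia).
  assert (Hlnb : ln b < (D + e) * ln (INR (S n))).
  { apply lt_div; auto. apply HN. lia. }
  assert (HL1L : ln (INR (S n)) <= ln 2 + ln (INR n)).
  { rewrite <- ln_mult; [|lra|apply (lt_INR 0); lia]. apply ln_le; [apply (lt_INR 0); lia|].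
    rewrite S_INR. assert (1 <= INR n) by (apply (le_INR 1); lia). lra. }
  assert (HLK : K <= e * ln (INR n)).
  { assert (K / e < ln (INR n)).
    { rewrite <- (ln_exp (K / e)). apply ln_increasing; [apply exp_pos|].
      assert (INR M <= INR n) by (apply le_INR; lia). lra. }
    apply Rmult_lt_compat_l with (r := e) in H; [|lra].
    replace (e * (K / e)) with K in H by (field; lra). lra. }
  apply div_le; auto.
  assert ((D + e) * ln (INR (S n)) <= (D + e) * (ln 2 + ln (INR n))).
  { apply Rmult_le_compat_l; lra. }
  assert (E1 : (D + e) * (ln 2 + ln (INR n)) = (D + e) * ln 2 + (D + e) * ln (INR n)) by ring.
  assert (E2 : (D + eps) * ln (INR n) = e * ln (INR n) + (D + e) * ln (INR n)) by (unfold e; field).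
  unfold K in HLK. lra.
Qed.
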